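(* For every $\mu\in[0,2]$, with $v_1=\frac{2}{2+\mu}$, \[ \psi(C^{\searrow}_\mu)=-2v_1^2+6v_1-5+\frac1{v_1},\qquad \xi(C^{\searrow}_\mu)=-4v_1^2+20v_1-17+\frac{2}{v_1}-\frac1{v_1^2}-12\ln(v_1). \] As $\mu$ ranges over $[0,2]$, $\mu\mapsto\psi(C^{\searrow}_\mu)$ is continuous and strictly decreasing from $0$ to $-\frac12$, and $\mu\mapsto\xi(C^{\searrow}_\mu)$ is continuous and strictly increasing from $0$ to $12\ln 2-8$.
   Context: For $\mu\in[0,2]$ let $v_0=\frac{\mu}{2+\mu}$, $v_1=\frac{2}{2+\mu}$ and define $h_\mu(t,v)=h_1(v)\mathbf{1}_{\{t\le v\}}+h_2(v)\mathbf{1}_{\{t>v\}}$ on $[0,1]^2$, where $(h_1,h_2)(v)=(0,\frac{v}{1-v})$ for $v\in[0,v_0]$, $(h_1,h_2)(v)=(v-\frac{\mu}{2}(1-v),\,v+\frac{\mu}{2}v)$ for $v\in(v_0,v_1]$, and $(h_1,h_2)(v)=(2-\frac1v,\,1)$ for $v\in(v_1,1]$. $C^{\searrow}_\mu(u,v):=\int_0^u h_\mu(t,v)\,dt$ (this is in general not a copula). For any function $C$ of this form with first partial derivative $h=\partial_1C$, set $\xi(C)=6\int_0^1\int_0^1 h(t,v)^2\,dt\,dv-2$ and $\psi(C)=6\int_0^1\int_0^1\mathbf{1}_{\{t\le v\}}h(t,v)\,dt\,dv-2$ (for copulas these coincide with $6\int\int(\partial_1C)^2-2$ and $6\int_0^1C(u,u)\,du-2$).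 *)

(* Defs.v *)
From Stdlib Require Import Reals.
From Coquelicot Require Import Coquelicot.
Open Scope R_scope.

Definition v0 (mu : R) : R := mu / (2 + mu).
Definition v1 (mu : R) : R := 2 / (2 + mu).

Definition h1 (mu v : R) : R :=
  if Rle_dec v (v0 mu) then 0
  else if Rle_dec v (v1 mu) then v - mu / 2 * (1 - v)
  else 2 - 1 / v.

Definition h2 (mu v : R) : R :=
  if Rle_dec v (v0 mu) then v / (1 - v)
  else if Rle_dec v (v1 mu) then v + mu / 2 * v
  else 1.

Definition h_mu (mu t v : R) : R :=
  if Rle_dec t v then h1 mu v else h2 mu v.

Definition C_down (mu u v : R) : R := RInt (fun t => h_mu mu t v) 0 u.

(* xi and psi of a function C = int_0^u h(t,v) dt, expressed via h = d_1 C *)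
Definition xi_h (h : R -> R -> R) : R :=
  6 * RInt (fun v => RInt (fun t => (h t v) ^ 2) 0 1) 0 1 - 2.

Definition psi_h (h : R -> R -> R) : R :=
  6 * RInt (fun v => RInt (fun t => (if Rle_dec t v then 1 else 0) * h t v) 0 1) 0 1 - 2.

Definition xi_down (mu : R) : R := xi_h (h_mu mu).
Definition psi_down (mu : R) : R := psi_h (h_mu mu).

Definition in02 (x : R) : Prop := 0 <= x <= 2.

(* Main.v *)
Require Import Defs.
From Stdlib Require Import Reals Lra.
From Coquelicot Require Import Coquelicot.
Open Scope R_scope.

Lemma piece (g f F : R -> R) p q : p <= q ->
  (forall x, p <= x <= q -> is_derive F x (f x)) ->
  (forall x, p <= x <= q -> continuous f x) ->
  (forall x, p < x < q -> f x = g x) -> is_RInt g p q (F q - F p).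
Proof.
  intros Hpq HD HC HE.
  apply is_RInt_ext with f.
  { rewrite Rmin_left by lra; rewrite Rmax_right by lra. exact HE. }
  apply (is_RInt_derive F f p q).
  - rewrite Rmin_left by lra; rewrite Rmax_right by lra. exact HD.
  - rewrite Rmin_left by lra; rewrite Rmax_right by lra. exact HC.
Qed.

Lemma chasles (f : R -> R) a b c l1 l2 :
  is_RInt f a b l1 -> is_RInt f b c l2 -> is_RInt f a c (l1 + l2).
Proof. intros H1 H2. exact (is_RInt_Chasles f a b c l1 l2 H1 H2). Qed.

Lemma inner (g : R -> R) v c1 c2 : 0 < v < 1 ->
  (forall t, 0 < t < v -> g t = c1) -> (forall t, v < t < 1 -> g t = c2) ->
  RInt g 0 1 = v * c1 + (1 - v) * c2.
Proof.
  intros Hv H1 H2. apply is_RInt_unique.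
  replace (v * c1 + (1 - v) * c2) with ((v - 0) * c1 + (1 - v) * c2) by ring.
  apply chasles with v.
  - apply is_RInt_ext with (fun _ => c1).
    + rewrite Rmin_left by lra; rewrite Rmax_right by lra. intros; symmetry; auto.
    + exact (is_RInt_const 0 v c1).
  - apply is_RInt_ext with (fun _ => c2).
    + rewrite Rmin_left by lra; rewrite Rmax_right by lra. intros; symmetry; auto.
    + exact (is_RInt_const v 1 c2).
Qed.

Section S.
Lemma v_facts mu : 0 <= mu <= 2 ->
  0 <= v0 mu <= 1/2 /\ 1/2 <= v1 mu <= 1 /\ v0 mu <= v1 mu /\ 1 - v0 mu = v1 mu.
Proof.
  intros H. unfold v0, v1.
  assert (0 < 2 + mu) by lra.
  repeat split.
  - apply Rdiv_le_0_compat; lra.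
  - apply Rmult_le_reg_r with (2+mu); [lra|]. field_simplify; lra.
  - apply Rmult_le_reg_r with (2+mu); [lra|]. field_simplify; lra.
  - apply Rmult_le_reg_r with (2+mu); [lra|]. field_simplify; lra.
  - apply Rmult_le_reg_r with (2+mu); [lra|]. field_simplify; lra.
  - field; lra.
Qed.
End S.

Lemma h1_lo mu v : v <= v0 mu -> h1 mu v = 0.
Proof. intros; unfold h1; destruct Rle_dec; [auto|lra]. Qed.
Lemma h1_mid mu v : v0 mu < v <= v1 mu -> h1 mu v = v - mu/2*(1-v).
Proof. intros; unfold h1; destruct Rle_dec; [lra|]; destruct Rle_dec; [auto|lra]. Qed.
Lemma h1_hi mu v : v1 mu < v -> v0 mu <= v1 mu -> h1 mu v = 2 - 1/v.
Proof. intros; unfold h1; destruct Rle_dec; [lra|]; destruct Rle_dec; [lra|auto]. Qed.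
Lemma h2_lo mu v : v <= v0 mu -> h2 mu v = v/(1-v).
Proof. intros; unfold h2; destruct Rle_dec; [auto|lra]. Qed.
Lemma h2_mid mu v : v0 mu < v <= v1 mu -> h2 mu v = v + mu/2*v.
Proof. intros; unfold h2; destruct Rle_dec; [lra|]; destruct Rle_dec; [auto|lra]. Qed.
Lemma h2_hi mu v : v1 mu < v -> v0 mu <= v1 mu -> h2 mu v = 1.
Proof. intros; unfold h2; destruct Rle_dec; [lra|]; destruct Rle_dec; [lra|auto]. Qed.

Lemma psi_inner mu v : 0 < v < 1 ->
  RInt (fun t => (if Rle_dec t v then 1 else 0) * h_mu mu t v) 0 1 = v * h1 mu v + (1 - v) * 0.
Proof.
  intros Hv. apply inner; auto; intros t Ht; unfold h_mu; destruct Rle_dec; try lra; ring.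
Qed.

Lemma xi_inner mu v : 0 < v < 1 ->
  RInt (fun t => (h_mu mu t v)^2) 0 1 = v * (h1 mu v)^2 + (1 - v) * (h2 mu v)^2.
Proof.
  intros Hv. apply inner; auto; intros t Ht; unfold h_mu; destruct Rle_dec; try lra; ring.
Qed.

Lemma psi_formula mu : 0 <= mu <= 2 ->
  psi_down mu = - 2 * (v1 mu) ^ 2 + 6 * v1 mu - 5 + 1 / v1 mu.
Proof.
  intros Hmu. destruct (v_facts mu Hmu) as (Ha & Hb & Hab & Hs).
  set (a := v0 mu) in *. set (b := v1 mu) in *.
  set (m := mu/2).
  assert (HI : is_RInt (fun v => RInt (fun t => (if Rle_dec t v then 1 else 0) * h_mu mu t v) 0 1) 0 1
     ((0 - 0) + (((1+m)*b^3/3 - m*b^2/2) - ((1+m)*a^3/3 - m*a^2/2)) + ((1^2 - 1) - (b^2 - b)))).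
  { apply chasles with b; [apply chasles with a|].
    - apply (piece _ (fun _ => 0) (fun _ => 0)); [lra| | |].
      + intros; auto_derive; auto.
      + intros; apply continuous_const.
      + intros x Hx. rewrite psi_inner by lra. rewrite h1_lo by (unfold a in *; lra). ring.
    - apply (piece _ (fun v => v * (v - m*(1-v)) + (1-v)*0) (fun v => (1+m)*v^3/3 - m*v^2/2)); [lra| | |].
      + intros; auto_derive; auto. field.
      + intros; apply (@ex_derive_continuous R_AbsRing R_NormedModule); auto_derive; auto.
      + intros x Hx. rewrite psi_inner by lra. rewrite h1_mid by (unfold a, b in *; lra). reflexivity.
    - apply (piece _ (fun v => v * (2 - 1/v) + (1-v)*0) (fun v => v^2 - v)); [lra| | |].
      + intros; auto_derive; [lra|]. field. lra.
      + intros; apply (@ex_derive_continuous R_AbsRing R_NormedModule); auto_derive; lra.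
      + intros x Hx. rewrite psi_inner by lra. rewrite h1_hi by (unfold a, b in *; lra). reflexivity. }
  unfold psi_down, psi_h. rewrite (is_RInt_unique _ _ _ _ HI).
  unfold a, b, m, v0, v1 in *. field. lra.
Qed.

Lemma xi_formula mu : 0 <= mu <= 2 ->
  xi_down mu = - 4 * (v1 mu) ^ 2 + 20 * v1 mu - 17 + 2 / v1 mu
                  - 1 / (v1 mu) ^ 2 - 12 * ln (v1 mu).
Proof.
  intros Hmu. destruct (v_facts mu Hmu) as (Ha & Hb & Hab & Hs).
  set (a := v0 mu) in *. set (b := v1 mu) in *.
  set (m := mu/2).
  assert (HI : is_RInt (fun v => RInt (fun t => (h_mu mu t v)^2) 0 1) 0 1
     (((- a^2/2 - a - ln (1 - a)) - (- 0^2/2 - 0 - ln (1 - 0)))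
      + (((1 - m^2)*b^3/3 + m^2*b^2/2) - ((1 - m^2)*a^3/3 + m^2*a^2/2))
      + ((3*1^2/2 - 3*1 + ln 1) - (3*b^2/2 - 3*b + ln b)))).
  { apply chasles with b; [apply chasles with a|].
    - apply (piece _ (fun v => v * 0^2 + (1-v)*(v/(1-v))^2) (fun v => - v^2/2 - v - ln (1 - v))); [lra| | |].
      + intros; auto_derive; [lra|]. field. lra.
      + intros; apply (@ex_derive_continuous R_AbsRing R_NormedModule); auto_derive; lra.
      + intros x Hx. rewrite xi_inner by lra. rewrite h1_lo, h2_lo by (unfold a in *; lra). reflexivity.
    - apply (piece _ (fun v => v * (v - m*(1-v))^2 + (1-v)*(v + m*v)^2) (fun v => (1 - m^2)*v^3/3 + m^2*v^2/2)); [lra| | |].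
      + intros; auto_derive; auto. field.
      + intros; apply (@ex_derive_continuous R_AbsRing R_NormedModule); auto_derive; auto.
      + intros x Hx. rewrite xi_inner by lra. rewrite h1_mid, h2_mid by (unfold a, b in *; lra). reflexivity.
    - apply (piece _ (fun v => v * (2 - 1/v)^2 + (1-v)*1^2) (fun v => 3*v^2/2 - 3*v + ln v)); [lra| | |].
      + intros; auto_derive; [lra|]. field. lra.
      + intros; apply (@ex_derive_continuous R_AbsRing R_NormedModule); auto_derive; lra.
      + intros x Hx. rewrite xi_inner by lra. rewrite h1_hi, h2_hi by (unfold a, b in *; lra). reflexivity. }
  unfold xi_down, xi_h. rewrite (is_RInt_unique _ _ _ _ HI).
  rewrite Hs, !Rminus_0_r, !ln_1.
  assert (Hb0 : b <> 0) by lra.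
  set (L := ln b).
  unfold a, b, m, v0, v1 in *. field. lra.
Qed.

Definition gP (v : R) := - 2 * v ^ 2 + 6 * v - 5 + 1 / v.
Definition gX (v : R) := - 4 * v ^ 2 + 20 * v - 17 + 2 / v - 1 / v ^ 2 - 12 * ln v.

Lemma v1_range mu : 0 <= mu <= 2 -> 1/2 <= v1 mu <= 1.
Proof. intros H; destruct (v_facts mu H) as (_ & Hb & _); exact Hb. Qed.

Lemma v1_lt a b : 0 <= a -> a < b -> v1 b < v1 a.
Proof.
  intros Ha Hab. unfold v1.
  assert (E : 2 / (2 + a) - 2 / (2 + b) = 2 * (b - a) / ((2 + a) * (2 + b))) by (field; lra).
  assert (0 < 2 * (b - a) / ((2 + a) * (2 + b))).
  { apply Rdiv_lt_0_compat; [lra|]. apply Rmult_lt_0_compat; lra. }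
  lra.
Qed.

Lemma gP_incr x y : 1/2 <= x -> x < y -> y <= 1 -> gP x < gP y.
Proof.
  intros Hx Hxy Hy.
  destruct (MVT_cor2 gP (fun v => - 4 * v + 6 - 1 / v^2) x y Hxy) as (c & Hc & Hc2).
  { intros c Hc. apply is_derive_Reals. unfold gP. auto_derive; [lra|]. field. lra. }
  assert (E : - 4 * c + 6 - 1 / c^2 = (2*c - 1) * (-2*c^2 + 2*c + 1) / c^2) by (field; lra).
  assert (0 < (2*c - 1) * (-2*c^2 + 2*c + 1) / c^2).
  { apply Rdiv_lt_0_compat; [|nra]. apply Rmult_lt_0_compat; nra. }
  assert (0 < (- 4 * c + 6 - 1 / c^2) * (y - x)) by (rewrite E; apply Rmult_lt_0_compat; lra).
  lra.
Qed.

Lemma gX_decr x y : 1/2 <= x -> x < y -> y <= 1 -> gX y < gX x.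
Proof.
  intros Hx Hxy Hy.
  destruct (MVT_cor2 gX (fun v => - 8 * v + 20 - 2 / v^2 + 2 / v^3 - 12 / v) x y Hxy) as (c & Hc & Hc2).
  { intros c Hc. apply is_derive_Reals. unfold gX. auto_derive; [assert (0 < c * (c*1)) by nra; repeat split; lra|]. field. lra. }
  assert (E : - 8 * c + 20 - 2 / c^2 + 2 / c^3 - 12 / c
              = - ((1 - c) * (2*c - 1) * (-4*c^2 + 4*c + 2) / c^3)) by (field; lra).
  assert (0 < (1 - c) * (2*c - 1) * (-4*c^2 + 4*c + 2) / c^3).
  { apply Rdiv_lt_0_compat; [|apply pow_lt; lra]. apply Rmult_lt_0_compat; [apply Rmult_lt_0_compat|]; nra. }
  assert (0 < ((1 - c) * (2*c - 1) * (-4*c^2 + 4*c + 2) / c^3) * (y - x)) by (apply Rmult_lt_0_compat; lra).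
  rewrite E in Hc. lra.
Qed.

Lemma cont_gen (P : R -> R) (f : R -> R) mu : 0 <= mu <= 2 ->
  (forall x, 0 <= x <= 2 -> P x = f x) ->
  continuous f mu ->
  filterlim P (within in02 (locally mu)) (locally (P mu)).
Proof.
  intros Hmu HE Hc. rewrite (HE mu Hmu).
  apply filterlim_within_ext with f.
  { intros x Hx; symmetry; apply HE; exact Hx. }
  apply (filterlim_filter_le_1 (F:=locally mu)).
  - apply filter_le_within.
  - exact Hc.
Qed.

Theorem mainTheorem5 :
  (forall mu : R, 0 <= mu <= 2 ->
     psi_down mu = - 2 * (v1 mu) ^ 2 + 6 * v1 mu - 5 + 1 / v1 mu /\
     xi_down mu = - 4 * (v1 mu) ^ 2 + 20 * v1 mu - 17 + 2 / v1 mu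
                  - 1 / (v1 mu) ^ 2 - 12 * ln (v1 mu)) /\
  (forall mu : R, 0 <= mu <= 2 ->
     filterlim psi_down (within in02 (locally mu)) (locally (psi_down mu))) /\
  (forall a b : R, 0 <= a -> a < b -> b <= 2 -> psi_down b < psi_down a) /\
  psi_down 0 = 0 /\ psi_down 2 = - 1 / 2 /\
  (forall mu : R, 0 <= mu <= 2 ->
     filterlim xi_down (within in02 (locally mu)) (locally (xi_down mu))) /\
  (forall a b : R, 0 <= a -> a < b -> b <= 2 -> xi_down a < xi_down b) /\
  xi_down 0 = 0 /\ xi_down 2 = 12 * ln 2 - 8.
Proof.
  assert (H0 : 0 <= 0 <= 2) by lra. assert (H2 : 0 <= 2 <= 2) by lra.
  assert (V0 : v1 0 = 1) by (unfold v1; field).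
  assert (V2 : v1 2 = / 2) by (unfold v1; field).
  repeat split.
  - apply psi_formula; auto.
  - apply xi_formula; auto.
  - intros mu Hmu. apply cont_gen with (fun x => gP (v1 x)); auto.
    + intros; apply psi_formula; auto.
    + apply (@ex_derive_continuous R_AbsRing R_NormedModule). unfold gP, v1.
      assert (0 < 2 / (2 + mu)) by (apply Rdiv_lt_0_compat; lra). auto_derive. repeat split; try lra; auto.
  - intros a b Ha Hab Hb.
    rewrite !psi_formula by lra.
    pose proof (v1_range a ltac:(lra)). pose proof (v1_range b ltac:(lra)).
    pose proof (v1_lt a b Ha Hab).
    apply (gP_incr (v1 b) (v1 a)); lra.
  - rewrite psi_formula by auto. rewrite V0. field.
  - rewrite psi_formula by auto. rewrite V2. field.
  - intros mu Hmu. apply cont_gen with (fun x => gX (v1 x)); auto.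
    + intros; apply xi_formula; auto.
    + apply (@ex_derive_continuous R_AbsRing R_NormedModule). unfold gX, v1.
      assert (Hp : 0 < 2 * / (2 + mu)) by (apply Rdiv_lt_0_compat; lra). assert (0 < 2 * / (2 + mu) * (2 * / (2 + mu) * 1)) by nra. auto_derive. repeat split; try lra; auto.

  - intros a b Ha Hab Hb.
    rewrite !xi_formula by lra.
    pose proof (v1_range a ltac:(lra)). pose proof (v1_range b ltac:(lra)).
    pose proof (v1_lt a b Ha Hab).
    apply (gX_decr (v1 b) (v1 a)); lra.
  - rewrite xi_formula by auto. rewrite V0, ln_1. field.
  - rewrite xi_formula by auto. rewrite V2, ln_Rinv by lra. field.
Qed.
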